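(* Let $X$ be a set with a prebornology $\mathcal{B}$, and let $\mathcal{C}_1,\mathcal{C}_2$ be coarse structures on $X$ whose induced prebornologies both equal $\mathcal{B}$. Then the coarse structures $\exp\mathcal{C}_1$ and $\exp\mathcal{C}_2$, restricted to $\flat(X)=\mathcal{B}\setminus\{\varnothing\}$, induce the same prebornology on $\flat(X)$.
   Context: A coarse structure on $X$ is a family of subsets of $X\times X$ containing the diagonal, closed under subsets, finite unions, inverses and compositions; its induced prebornology is $\{B\subseteq X: B\times B\in\mathcal{C}\}$. For $E\subseteq X\times X$, $\exp E=\{(A,B)\in\mathcal{P}(X)^2: A\subseteq E[B]\text{ and }B\subseteq E[A]\}$, and $\exp\mathcal{C}$ is the coarse structure on $\mathcal{P}(X)$ generated by $\{\exp E: E\in\mathcal{C}\}$; its restriction to $\flat(X)$ is $\{E'\cap(\flat(X)\times\flat(X)):E'\in\exp\mathcal{C}\}$, and the induced prebornology on $\flat(X)$ consists of $\mathcal{S}\subseteq\flat(X)$ with $\mathcal{S}\times\mathcal{S}$ in that restricted structure. *)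

(* Defs.v *)
Definition relX (X : Type) := X -> X -> Prop.

Definition IsCoarseStructure {X : Type} (C : relX X -> Prop) : Prop :=
  C (fun x y => x = y) /\
  (forall E F : relX X, C E -> (forall x y, F x y -> E x y) -> C F) /\
  (forall E F : relX X, C E -> C F -> C (fun x y => E x y \/ F x y)) /\
  (forall E : relX X, C E -> C (fun x y => E y x)) /\
  (forall E F : relX X, C E -> C F -> C (fun x z => exists y, E x y /\ F y z)).

Definition IsPrebornology {X : Type} (B : (X -> Prop) -> Prop) : Prop :=
  (forall A A' : X -> Prop, B A -> (forall x, A' x -> A x) -> B A') /\
  (forall x : X, B (fun y => y = x)).

Definition inducedPreb {X : Type} (C : relX X -> Prop) (B : X -> Prop) : Prop :=
  C (fun x y => B x /\ B y).

Definition ballSet {X : Type} (E : relX X) (A : X -> Prop) : X -> Prop :=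
  fun y => exists x, A x /\ E x y.

Definition expRel {X : Type} (E : relX X) : relX (X -> Prop) :=
  fun A B => (forall x, A x -> ballSet E B x) /\ (forall x, B x -> ballSet E A x).

(* exp C : the coarse structure on P(X) generated by {exp E | E in C} *)
Definition expCoarse {X : Type} (C : relX X -> Prop) : relX (X -> Prop) -> Prop :=
  fun F => forall D : relX (X -> Prop) -> Prop,
    IsCoarseStructure D -> (forall E, C E -> D (expRel E)) -> D F.

Definition flatX {X : Type} (B : (X -> Prop) -> Prop) (A : X -> Prop) : Prop :=
  B A /\ exists x, A x.

Definition expRestr {X : Type} (B : (X -> Prop) -> Prop) (C : relX X -> Prop)
  (F : relX (X -> Prop)) : Prop :=
  exists E', expCoarse C E' /\
    forall A A', F A A' <-> (E' A A' /\ flatX B A /\ flatX B A').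

Definition inducedPrebFlat {X : Type} (B : (X -> Prop) -> Prop) (C : relX X -> Prop)
  (S : (X -> Prop) -> Prop) : Prop :=
  (forall A, S A -> flatX B A) /\ expRestr B C (fun A A' => S A /\ S A').

(* Main.v *)
Require Import Defs.
From Stdlib Require Import Classical.

Lemma eC_sub {X : Type} (C : relX X -> Prop) (F G : relX (X -> Prop)) :
  expCoarse C F -> (forall A B, G A B -> F A B) -> expCoarse C G.
Proof.
  intros hF hG D hD hgen. exact (proj1 (proj2 hD) F G (hF D hD hgen) hG).
Qed.

Lemma eC_gen {X : Type} (C : relX X -> Prop) E : C E -> expCoarse C (expRel E).
Proof. intros hE D _ hgen. exact (hgen E hE). Qed.

Lemma eC_diag {X : Type} (C : relX X -> Prop) : expCoarse C (fun A B => A = B).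
Proof. intros D hD _. exact (proj1 hD). Qed.

Lemma eC_bounded {X : Type} (C : relX X -> Prop) (hC : IsCoarseStructure C)
  (F : relX (X -> Prop)) :
  expCoarse C F -> exists E, C E /\ forall A B, F A B -> expRel E A B.
Proof.
  destruct hC as [hd [hs [hu [hi hc]]]].
  intros hF. apply hF.
  - repeat split.
    + exists (fun x y => x = y). split; [exact hd|]. intros A B ->.
      split; intros x hx; exists x; auto.
    + intros E F' [E0 [hE0 h]] hsub. exists E0. split; auto.
    + intros E F' [E0 [hE0 h0]] [E1 [hE1 h1]].
      exists (fun x y => E0 x y \/ E1 x y). split; [apply hu; auto|].
      intros A B [hab|hab]; [destruct (h0 A B hab) as [p q]|destruct (h1 A B hab) as [p q]];
      split; intros x hx;
      [destruct (p x hx) as [y [? ?]]|destruct (q x hx) as [y [? ?]]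
      |destruct (p x hx) as [y [? ?]]|destruct (q x hx) as [y [? ?]]]; exists y; auto.
    + intros E [E0 [hE0 h]]. exists E0. split; auto.
      intros A B hab. destruct (h B A hab) as [p q]. split; auto.
    + intros E F' [E0 [hE0 h0]] [E1 [hE1 h1]].
      exists (fun x z => (exists y, E0 x y /\ E1 y z) \/ (exists y, E1 x y /\ E0 y z)).
      split; [apply hu; apply hc; auto|].
      intros A C' [B0 [hab hbc]].
      destruct (h0 A B0 hab) as [p0 q0]. destruct (h1 B0 C' hbc) as [p1 q1].
      split.
      * intros x hx. destruct (p0 x hx) as [b [hb e]]. destruct (p1 b hb) as [c [hc' f]].
        exists c. split; auto. right. exists b. auto.
      * intros x hx. destruct (q1 x hx) as [b [hb e]]. destruct (q0 b hb) as [a [ha f]].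
        exists a. split; auto. left. exists b. auto.
  - intros E hE. exists E. auto.
Qed.

Lemma oneDir (X : Type) (B : (X -> Prop) -> Prop)
  (C1 C2 : relX X -> Prop)
  (hC1 : IsCoarseStructure C1)
  (hB1 : forall A, inducedPreb C1 A <-> B A)
  (hB2 : forall A, inducedPreb C2 A <-> B A) :
  forall S : (X -> Prop) -> Prop,
    inducedPrebFlat B C1 S -> inducedPrebFlat B C2 S.
Proof.
  intros S [hSf [E' [hE' hiff]]]. split; [exact hSf|].
  exists (fun A A' => S A /\ S A'). split.
  2:{ intros A A'. split.
      - intros [h1 h2]. repeat split; auto; apply hSf; auto.
      - intros [h _]. exact h. }
  destruct (classic (exists A0, S A0)) as [[A0 hA0]|hne].
  2:{ apply (eC_sub _ _ _ (eC_diag C2)). intros A A2 [hA _]. exfalso; eauto. }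
  set (U := fun x => exists A, S A /\ A x).
  assert (hSS : expCoarse C1 (fun A A' => S A /\ S A')).
  { apply (eC_sub _ _ _ hE'). intros A A' h. apply hiff. exact h. }
  destruct (eC_bounded C1 hC1 _ hSS) as [E [hE hb]].
  destruct hC1 as [hd [hs [hu [hi hc]]]].
  assert (hUB : B U).
  { apply hB1. unfold inducedPreb.
    assert (hA0B : C1 (fun x y => A0 x /\ A0 y)) by (apply hB1; apply hSf; auto).
    apply (hs (fun x z => exists y, (fun x y => E y x) x y /\
              (fun x z => exists w, (fun x y => A0 x /\ A0 y) x w /\ E w z) y z)).
    - apply hc; [apply hi; auto| apply hc; auto].
    - intros x z [[A [hA hx]] [A' [hA' hz]]].
      destruct (hb A0 A (conj hA0 hA)) as [_ q]. destruct (q x hx) as [a [ha ea]].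
      destruct (hb A0 A' (conj hA0 hA')) as [_ q']. destruct (q' z hz) as [a' [ha' ea']].
      exists a. split; auto. exists a'. auto. }
  apply (eC_sub _ _ _ (eC_gen C2 _ (proj2 (hB2 U) hUB))).
  intros A A' [hA hA'].
  destruct (proj2 (hSf A hA)) as [a ha]. destruct (proj2 (hSf A' hA')) as [a' ha'].
  split; intros x hx.
  - exists a'. split; auto. split; [exists A'|exists A]; auto.
  - exists a. split; auto. split; [exists A|exists A']; auto.
Qed.

Theorem mainTheorem19 (X : Type) (B : (X -> Prop) -> Prop)
  (C1 C2 : relX X -> Prop)
  (hB : IsPrebornology B)
  (hC1 : IsCoarseStructure C1) (hC2 : IsCoarseStructure C2)
  (hB1 : forall A, inducedPreb C1 A <-> B A)
  (hB2 : forall A, inducedPreb C2 A <-> B A) :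
  forall S : (X -> Prop) -> Prop,
    inducedPrebFlat B C1 S <-> inducedPrebFlat B C2 S.
Proof.
  intros S. split; apply oneDir; auto.
Qed.
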